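(* Every HCA graph with at least one edge contains an essential edge.
   Context: An HCA (Helly circular-arc) graph is a graph $G$ admitting a map $\alpha$ from $V(G)$ to arcs of a discrete circle (sets of consecutive points of a directed cycle) such that distinct vertices $u,v$ are adjacent iff $\alpha(u)\cap\alpha(v)\ne\emptyset$, and the family of arcs has the Helly property (every pairwise intersecting subfamily has a common point). A maxclique is an inclusion-maximal clique; an edge is essential if it is contained in exactly one maxclique. *)

(* Defs.v *)
From mathcomp Require Import all_boot.
Set Implicit Arguments. Unset Strict Implicit. Unset Printing Implicit Defensive.

(* A simple graph: vertex set a finType T, adjacency a symmetric irreflexive
   boolean relation e. *)

(* The discrete circle with n >= 1 points is 'I_n, directed by i |-> i+1 mod n.
   The arc starting at s of length l (1 <= l <= n) is
   {s, s+1, ..., s+l-1} (mod n). *)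
Definition arc_of (n : nat) (s : 'I_n) (l : nat) : {set 'I_n} :=
  [set x : 'I_n | (x + n - s) %% n < l].

Definition is_arc (n : nat) (A : {set 'I_n}) : Prop :=
  exists (s : 'I_n) (l : nat), 0 < l <= n /\ A = arc_of s l.

Definition helly (T : finType) (n : nat) (alpha : T -> {set 'I_n}) : Prop :=
  forall S : {set T},
    (forall u v, u \in S -> v \in S -> alpha u :&: alpha v != set0) ->
    exists p : 'I_n, forall u, u \in S -> p \in alpha u.

Definition HCA (T : finType) (e : rel T) : Prop :=
  exists (n : nat) (alpha : T -> {set 'I_n}),
    0 < n /\
    (forall v, is_arc (alpha v)) /\
    (forall u v, u != v -> (e u v <-> alpha u :&: alpha v != set0)) /\
    helly alpha.

Definition clique (T : finType) (e : rel T) (K : {set T}) : bool :=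
  [forall u in K, forall v in K, (u != v) ==> e u v].

Definition maxclique (T : finType) (e : rel T) (K : {set T}) : bool :=
  maxset (clique e) K.

Definition essential (T : finType) (e : rel T) (u v : T) : bool :=
  #|[set K : {set T} | maxclique e K && (u \in K) && (v \in K)]| == 1.

(* Main.v *)
Require Import Defs.
From mathcomp Require Import all_boot zify.
Set Implicit Arguments. Unset Strict Implicit. Unset Printing Implicit Defensive.

Section Geo.
Variable n : nat.
Implicit Types a b c s t x y z p : 'I_n.

Definition d a b : nat := (b + n - a) %% n.

Lemma ord_pos a : 0 < n.
Proof. exact: leq_ltn_trans (leq0n a) (ltn_ord a). Qed.

Definition succ a : 'I_n := Ordinal (ltn_pmod a.+1 (ord_pos a)).

Lemma dP a b : (a <= b /\ a < n /\ b < n /\ d a b = b - a) \/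
               (b < a /\ a < n /\ b < n /\ d a b = n + b - a).
Proof.
have ha := ltn_ord a; have hb := ltn_ord b; rewrite /d.
case: (leqP a b) => h.
- left; do 3 split => //.
  have ->: b + n - a = (b - a) + n by lia.
  rewrite modnDr modn_small //; lia.
- right; do 3 split => //; rewrite modn_small; lia.
Qed.

Lemma succP a : (a.+1 < n /\ a < n /\ nat_of_ord (succ a) = a.+1) \/
                (a.+1 = n /\ a < n /\ nat_of_ord (succ a) = 0).
Proof.
have ha := ltn_ord a; rewrite /succ /=.
case: (ltnP a.+1 n) => h.
- by left; rewrite modn_small.
- right; have e: a.+1 = n by lia. by rewrite e modnn.
Qed.

Ltac dsolve :=
  repeat match goal with
  | |- context [d ?a ?b] =>
      let E := fresh "E" in case: (dP a b) => [[? [? [? E]]]|[? [? [? E]]]]; rewrite -> E in *; clear E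
  | H : context [d ?a ?b] |- _ =>
      let E := fresh "E" in case: (dP a b) => [[? [? [? E]]]|[? [? [? E]]]]; rewrite -> E in *; clear E
  end;
  repeat match goal with
  | |- context [nat_of_ord (succ ?a)] =>
      let E := fresh "E" in case: (succP a) => [[? [? E]]|[? [? E]]]; rewrite -> E in *; clear E
  | H : context [nat_of_ord (succ ?a)] |- _ =>
      let E := fresh "E" in case: (succP a) => [[? [? E]]|[? [? E]]]; rewrite -> E in *; clear E
  end; lia.

Lemma in_arc s l x : (x \in arc_of s l) = (d s x < l).
Proof. by rewrite inE. Qed.

Lemma d_lt a b : d a b < n.
Proof. dsolve. Qed.

Lemma dxx a : d a a = 0.
Proof. dsolve. Qed.

Lemma d_inj a b c : d a b = d a c -> b = c.
Proof. move=> h; apply: val_inj => /=; move: h; dsolve. Qed.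

Lemma nest a a' p : d a' a <= d a' p \/ d a a' <= d a p.
Proof. dsolve. Qed.

Lemma cover y t x : y != t -> d y x <= d y t \/ d t x <= d t y.
Proof. move/eqP=> h; have h': nat_of_ord y <> nat_of_ord t by move=> e; apply: h; apply: val_inj.
dsolve. Qed.

Lemma nest2 a z t x : ~~ (d a z <= d a t) -> d a x <= d a t -> d z x <= d z t.
Proof. move=> h1 h2; move: h1 h2; dsolve. Qed.

Lemma path_sub y t p x : d y p <= d y t -> d p x <= d p t -> d y x <= d y t.
Proof. move=> h1 h2; move: h1 h2; dsolve. Qed.

Lemma arc_end_path s l t y z : 0 < l <= n ->
  t \in arc_of s l -> succ t \notin arc_of s l -> y \in arc_of s l ->
  d y z <= d y t -> z \in arc_of s l.
Proof. rewrite !in_arc => hl h1 h2 h3 h4; move: hl h1 h2 h3 h4; dsolve. Qed.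

Lemma arc_two s l a b z x : 0 < l <= n ->
  a \in arc_of s l -> b \in arc_of s l -> z \notin arc_of s l ->
  d a z <= d a b -> d b x <= d b a -> x \in arc_of s l.
Proof. rewrite !in_arc => hl h1 h2 h3 h4 h5; move: hl h1 h2 h3 h4 h5; dsolve. Qed.

Lemma d_succ y q : d y (succ q) = (d y q).+1 %% n.
Proof.
case: (ltnP (d y q).+1 n) => h.
- rewrite modn_small //; move: h; dsolve.
- have e: (d y q).+1 = n by have := d_lt y q; lia.
  rewrite e modnn; move: e; dsolve.
Qed.

Lemma d_iter y k : d y (iter k succ y) = k %% n.
Proof.
elim: k => [|k IH] /=; first by rewrite dxx mod0n.
by rewrite d_succ IH -addn1 modnDml addn1.
Qed.

Lemma exitA (A : {set 'I_n}) y z : y \in A -> z \notin A ->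
  exists p, [/\ p \in A, succ p \notin A & d y p < d y z].
Proof.
move=> yA zA.
have hz : z = iter (d y z) succ y.
  by apply: (@d_inj y); rewrite d_iter modn_small // d_lt.
have key : forall k, k <= d y z -> iter k succ y \in A \/
   exists p, [/\ p \in A, succ p \notin A & d y p < k].
  elim=> [|k IH] hk; first by left.
  case: (IH (ltnW hk)) => [h|[p [h1 h2 h3]]]; last by right; exists p; split => //; lia.
  case: (boolP (iter k.+1 succ y \in A)) => h'; first by left.
  right; exists (iter k succ y); split => //.
  rewrite d_iter modn_small //; have := d_lt y z; lia.
case: (key _ (leqnn _)) => [|//]; by rewrite -hz (negbTE zA).
Qed.

Lemma arc_end_pathA (A : {set 'I_n}) t y z : is_arc A ->
  t \in A -> succ t \notin A -> y \in A -> d y z <= d y t -> z \in A.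
Proof. by case=> [s [l [hl ->]]]; apply: arc_end_path. Qed.

Lemma arc_twoA (A : {set 'I_n}) a b z x : is_arc A ->
  a \in A -> b \in A -> z \notin A -> d a z <= d a b -> d b x <= d b a -> x \in A.
Proof. by case=> [s [l [hl ->]]]; apply: arc_two. Qed.

Lemma arc_nonempty (A : {set 'I_n}) : is_arc A -> A != set0.
Proof.
case=> [s [l [hl ->]]]; apply/set0Pn; exists s; rewrite in_arc dxx; lia.
Qed.

Lemma notT (A : {set 'I_n}) : A != setT -> exists x, x \notin A.
Proof.
move=> h; case: (boolP [exists x, x \notin A]) => [/existsP [x hx]|hn]; first by exists x.
case/negP: h; apply/eqP/setP => x; rewrite inE; apply/negPn/negP => hx.
by case/negP: hn; apply/existsP; exists x.
Qed.

Lemma arc_end (A : {set 'I_n}) : is_arc A -> A != setT ->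
  exists t, t \in A /\ succ t \notin A.
Proof.
case=> [s [l [hl eA]]] hT.
have ll : l < n.
  rewrite ltn_neqAle; case/andP: hl => _ ->; rewrite andbT.
  apply/eqP => el; case/negP: hT; apply/eqP/setP => x.
  by rewrite eA in_arc inE el d_lt.
exists (iter l.-1 succ s); rewrite eA !in_arc d_succ d_iter !modn_small; lia.
Qed.

End Geo.

Section Main.
Variables (T : finType) (e : rel T) (n : nat) (alpha : T -> {set 'I_n}).
Hypothesis esym : symmetric e.
Hypothesis harc : forall v, is_arc (alpha v).
Hypothesis hadj : forall u v, u != v -> (e u v <-> alpha u :&: alpha v != set0).
Hypothesis hhelly : helly alpha.

Lemma clique_inter K : clique e K -> forall a b, a \in K -> b \in K ->
  alpha a :&: alpha b != set0.
Proof.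
move=> cK a b ha hb; case: (eqVneq a b) => [->|hab].
  by rewrite setIid arc_nonempty.
apply/(hadj hab).
by move/forallP: cK => /(_ a) /implyP /(_ ha) /forallP /(_ b) /implyP /(_ hb) /implyP /(_ hab).
Qed.

Lemma key u v (S : {set T}) : u != v -> e u v ->
  (forall w1 w2, w1 \in S -> w2 \in S -> alpha w1 :&: alpha w2 != set0) ->
  (forall K, maxclique e K -> u \in K -> v \in K -> K \subset S) ->
  essential e u v.
Proof.
move=> huv euv hS hK.
have [y hy] := hhelly hS.
pose C := [set w | y \in alpha w].
have cC : clique e C.
  apply/forallP => a; apply/implyP => ha; apply/forallP => b; apply/implyP => hb.
  apply/implyP => hab; apply/(hadj hab)/set0Pn; exists y.
  by move: ha hb; rewrite !inE => ha hb; rewrite ha hb.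
have cuv : clique e [set u; v].
  apply/forallP => a; apply/implyP => ha; apply/forallP => b; apply/implyP => hb.
  apply/implyP => hab; move: ha hb hab; rewrite !inE.
  case/orP=> /eqP -> ; case/orP=> /eqP -> //; rewrite ?eqxx //.
  by rewrite esym.
have [K0 mK0 sK0] := maxset_exists cuv.
have hu0 : u \in K0 by apply: (subsetP sK0); rewrite !inE eqxx.
have hv0 : v \in K0 by apply: (subsetP sK0); rewrite !inE eqxx orbT.
have allC : forall K, maxclique e K -> u \in K -> v \in K -> K = C.
  move=> K mK hu hv.
  have sKC : K \subset C.
    apply/subsetP => w hw; rewrite inE; apply: hy.
    exact: (subsetP (hK K mK hu hv)).
  by symmetry; apply: (proj2 (maxsetP mK)).
rewrite /essential; apply/cards1P; exists C; apply/setP => K; rewrite !inE.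
apply/idP/eqP.
- by case/andP => /andP [mK hu] hv; apply: allC.
- by move=> ->; rewrite -(allC K0 mK0 hu0 hv0) hu0 hv0 !andbT; exact: mK0.
Qed.

Definition elig u v (t : 'I_n) :=
  [&& u != v, t \in alpha u, succ t \notin alpha u, t \in alpha v &
      alpha u :|: alpha v != setT].

Definition J u v (t : 'I_n) :=
  [set a : 'I_n | [forall x, (d a x <= d a t) ==> (x \in alpha u :&: alpha v)]].

Lemma L1 u v t y z : elig u v t -> y \in alpha u :&: alpha v -> d y z <= d y t ->
  z \in alpha u :&: alpha v.
Proof.
case/and5P => huv tu stu tv cov /setIP [yu yv] h.
have zu := arc_end_pathA (harc u) tu stu yu h.
rewrite inE zu /=; case: (boolP (z \in alpha v)) => // zv.
have ynt : y != t.
  apply/eqP => eyt; move: h; rewrite eyt dxx leqn0 => /eqP.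
  rewrite -(dxx t) => /d_inj ezt; by rewrite ezt tv in zv.
case/negP: cov; apply/eqP/setP => x; rewrite !inE.
case: (cover x ynt) => hx.
- by rewrite (arc_end_pathA (harc u) tu stu yu hx).
- by rewrite (arc_twoA (harc v) yv tv zv h hx) orbT.
Qed.

Lemma JI u v t a : elig u v t -> (a \in J u v t) = (a \in alpha u :&: alpha v).
Proof.
move=> el; rewrite inE; apply/forallP/idP.
- by move=> /(_ a); rewrite dxx leq0n.
- by move=> ha x; apply/implyP => hx; apply: (L1 el ha hx).
Qed.

Lemma step u v t : elig u v t ->
  (exists u' v' t', elig u' v' t' /\ #|J u' v' t'| < #|J u v t|) \/
  exists a b, e a b /\ essential e a b.
Proof.
move=> el.
case: (boolP [exists u', exists v', exists t', elig u' v' t' && (#|J u' v' t'| < #|J u v t|)])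
  => [/existsP [u' /existsP [v' /existsP [t' /andP [h1 h2]]]]|nosm0].
  by left; exists u', v', t'.
have nosm : ~ (exists u' v' t', elig u' v' t' /\ #|J u' v' t'| < #|J u v t|).
  move=> [u' [v' [t' [h1 h2]]]]; case/negP: nosm0.
  by apply/existsP; exists u'; apply/existsP; exists v'; apply/existsP; exists t'; rewrite h1 h2.
right.
exists u, v; have /and5P [huv tu stu tv cov] := el.
have euv : e u v by apply/(hadj huv)/set0Pn; exists t; rewrite inE tu tv.
split=> //.
set I := alpha u :&: alpha v.
pose S := [set w | alpha w :&: I != set0].
have nocov : forall u' v' t', u' != v' -> t' \in alpha u' -> succ t' \notin alpha u' ->
    t' \in alpha v' -> J u' v' t' \proper J u v t -> alpha u' :|: alpha v' = setT.
  move=> u' v' t' h1 h2 h3 h4 h5; apply/eqP; apply/negPn/negP => c.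
  apply: nosm; exists u', v', t'; split; last exact: proper_card.
  by rewrite /elig h1 h2 h3 h4 c.
have tI : t \in I by rewrite inE tu tv.
have claim : forall w, w \in S -> I \subset alpha w \/
    (forall x, x \notin alpha u -> x \in alpha w) \/
    (forall x, x \notin alpha v -> x \in alpha w).
  move=> w; rewrite inE => /set0Pn [y /setIP [yw yI]].
  case: (boolP (I \subset alpha w)) => [sub|nsub]; first by left.
  right; have [z zI zw] := subsetPn nsub.
  case: (boolP (t \in alpha w)) => tw.
  - left.
    have uw : u != w.
      apply/eqP => E; move: zw; rewrite -E; move: zI; rewrite inE => /andP [-> _].
      by [].
    have pr : J u w t \proper J u v t.
      apply/properP; split.
      + apply/subsetP => a; rewrite inE => /forallP ha; rewrite (JI _ el).
        have nz : ~~ (d a z <= d a t).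
          apply/negP => hz; move: (implyP (ha z) hz); rewrite inE (negbTE zw) andbF.
          by [].
        apply: (L1 el zI); apply: (nest2 nz); by rewrite dxx.
      + exists z; first by rewrite (JI _ el).
        rewrite inE; apply/negP => /forallP /(_ z); rewrite dxx leq0n /= inE (negbTE zw).
        by rewrite andbF.
    have := nocov u w t uw tu stu tw pr => /setP cv x xu.
    by move: (cv x); rewrite !inE (negbTE xu).
  - have [p [pw spw hp]] := exitA yw tw.
    have pI : p \in I := L1 el yI (ltnW hp).
    have sub : (J w u p \subset J u v t) \/ (J w v p \subset J u v t).
      have inx : forall x a, a \in J w x p -> a \in alpha x.
        by move=> x a; rewrite inE => /forallP /(_ a); rewrite dxx leq0n inE => /andP [].
      have subL : (forall a, a \in J w u p -> a \in alpha v) -> J w u p \subset J u v t.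
        move=> h; apply/subsetP => a ha; rewrite (JI _ el) inE (inx _ _ ha).
        exact: h.
      have subR : (forall a, a \in J w v p -> a \in alpha u) -> J w v p \subset J u v t.
        move=> h; apply/subsetP => a ha; rewrite (JI _ el) inE (inx _ _ ha) andbT.
        exact: h.
      case: (boolP [exists a, (a \in J w u p) && (a \notin alpha v)]) =>
        [/existsP [a /andP [ha nav]] | none].
      + right; apply: subR.
        move=> a' ha'; case: (boolP (a' \in alpha u)) => // na'u.
        case: (nest a a' p) => hn.
        * move: ha'; rewrite inE => /forallP /(_ a) /implyP /(_ hn); rewrite inE => /andP [_ av].
          by rewrite av in nav.
        * move: ha; rewrite inE => /forallP /(_ a') /implyP /(_ hn); rewrite inE => /andP [_ au].
          by rewrite au in na'u.
      + left; apply: subL.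
        move=> a ha; apply/negPn/negP => nav; case/negP: none; apply/existsP.
        by exists a; rewrite ha nav.
    have tJ : forall x, t \notin J w x p.
      move=> x; rewrite inE; apply/negP => /forallP /(_ t); rewrite dxx leq0n inE.
      by rewrite (negbTE tw).
    have tJ' : t \in J u v t by rewrite (JI _ el).
    case: sub => sb.
    + left.
      have wu : w != u by apply/eqP => E; move: tw; rewrite E tu.
      have := nocov w u p wu pw spw (setIP pI).1 _.
      move=> /(_ _) H.
      have pr : J w u p \proper J u v t by apply/properP; split => //; exists t.
      move/setP: (H pr) => cv x xu.
      by move: (cv x); rewrite !inE (negbTE xu) orbF.
    + right.
      have wv : w != v by apply/eqP => E; move: tw; rewrite E tv.
      have pr : J w v p \proper J u v t by apply/properP; split => //; exists t.
      move/setP: (nocov w v p wv pw spw (setIP pI).2 pr) => cv x xv.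
      by move: (cv x); rewrite !inE (negbTE xv) orbF.
have [o ho] := notT cov.
move: ho; rewrite inE negb_or => /andP [ou ov].
apply: key => //.
- move=> w1 w2 h1 h2.
  have mS : forall w, w \in S -> exists2 y, y \in alpha w & y \in I.
    move=> w; rewrite inE => /set0Pn [y /setIP [h h']]; by exists y.
  case: (claim w1 h1) => [s1|c1].
    have [y y2 yI] := mS w2 h2; apply/set0Pn; exists y.
    by rewrite inE y2 (subsetP s1 _ yI).
  case: (claim w2 h2) => [s2|c2].
    have [y y1 yI] := mS w1 h1; apply/set0Pn; exists y.
    by rewrite inE y1 (subsetP s2 _ yI).
  apply/set0Pn; exists o; rewrite inE.
  by case: c1 => c1; case: c2 => c2; rewrite ?(c1 _ ou) ?(c1 _ ov) ?(c2 _ ou) ?(c2 _ ov).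
- move=> K mK hu hv.
  have cK := maxsetp mK.
  have [q hq] := hhelly (clique_inter cK).
  apply/subsetP => w hw; rewrite inE; apply/set0Pn; exists q.
  by rewrite !inE (hq w hw) (hq u hu) (hq v hv).
Qed.

Lemma caseA m u v t : #|J u v t| <= m -> elig u v t ->
  exists a b, e a b /\ essential e a b.
Proof.
elim: m u v t => [|m IH] u v t hm el; case: (step el) => // [[u' [v' [t' [el' lt]]]]].
- lia.
- apply: (IH u' v' t') => //; lia.
Qed.

Hypothesis eirr : irreflexive e.

Lemma caseB : ~ (exists u v t, elig u v t) -> (exists u v, e u v) ->
  exists a b, e a b /\ essential e a b.
Proof.
move=> nel [u0 [v0 e0]].
have nocovB : forall u' v' t', u' != v' -> t' \in alpha u' -> succ t' \notin alpha u' ->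
    t' \in alpha v' -> alpha u' :|: alpha v' = setT.
  move=> u' v' t' h1 h2 h3 h4; apply/eqP; apply/negPn/negP => c.
  by apply: nel; exists u', v', t'; rewrite /elig h1 h2 h3 h4 c.
have ne0 : u0 != v0 by apply/eqP => E; move: e0; rewrite E eirr.
case: (boolP [forall w, alpha w == setT]) => [allT|nT].
  exists u0, v0; split => //.
  have p1 : forall w1 w2, w1 \in [set: T] -> w2 \in [set: T] -> alpha w1 :&: alpha w2 != set0.
    move=> w1 w2 _ _; rewrite (eqP (forallP allT w1)) (eqP (forallP allT w2)) setIid.
    by rewrite -(eqP (forallP allT u0)) arc_nonempty.
  apply: (key ne0 e0 p1) => K *; apply/subsetP => x; rewrite inE.
  by [].
have [u [v [huv [euv nfu]]]] : exists u v, u != v /\ e u v /\ alpha u != setT.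
  case: (boolP (alpha u0 == setT)) => h0; last by exists u0, v0.
  case: (boolP (alpha v0 == setT)) => h1; last by exists v0, u0; split; [rewrite eq_sym | split; [rewrite esym|]].
  have [w hw] : exists w, alpha w != setT.
    by move/forallPn: nT => [w hw]; exists w.
  have wu : w != u0 by apply/eqP => E; move: hw; rewrite E h0.
  exists w, u0; split => //; split => //; apply/(hadj wu).
  by rewrite (eqP h0) setIT arc_nonempty.
exists u, v; split => //.
have [t [tu stu]] := arc_end (harc u) nfu.
have hn : forall w, w != u -> alpha w :&: alpha u != set0 ->
    forall x, x \notin alpha u -> x \in alpha w.
  move=> w wu /set0Pn [y /setIP [yw yu]] x xu.
  have cv : alpha w :|: alpha u = setT.
    case: (boolP (t \in alpha w)) => tw.
      by rewrite setUC; apply: (nocovB u w t) => //; rewrite eq_sym.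
    have [p [pw spw hp]] := exitA yw tw.
    apply: (nocovB w u p) => //.
    exact: arc_end_pathA (harc u) tu stu yu (ltnW hp).
  by move/setP: cv => /(_ x); rewrite !inE (negbTE xu) orbF.
have [o ou] : exists o, o \notin alpha u by exists (succ t).
pose S := [set w | alpha w :&: alpha u != set0].
apply: (@key _ _ S) => //.
- move=> w1 w2; rewrite !inE => h1 h2.
  case: (eqVneq w1 u) => [->|n1]; first by rewrite setIC.
  case: (eqVneq w2 u) => [->|n2]; first by [].
  by apply/set0Pn; exists o; rewrite inE (hn _ n1 h1 _ ou) (hn _ n2 h2 _ ou).
- move=> K mK hu _; apply/subsetP => w hw; rewrite inE.
  exact: clique_inter (maxsetp mK) _ _ hw hu.
Qed.

End Main.

Theorem lemma16 (T : finType) (e : rel T) :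
  symmetric e -> irreflexive e -> HCA e ->
  (exists u v, e u v) ->
  exists u v, e u v /\ essential e u v.
Proof.
move=> esym eirr [n [alpha [hn [harc [hadj hhelly]]]]] hedge.
case: (boolP [exists u, exists v, exists t, elig alpha u v t]).
- move=> /existsP [u /existsP [v /existsP [t el]]].
  exact: (caseA esym harc hadj hhelly (leqnn _) el).
- move=> none; apply: (caseB esym harc hadj hhelly eirr) => // [[u [v [t el]]]].
  case/negP: none; apply/existsP; exists u; apply/existsP; exists v; apply/existsP; exists t.
  exact: el.
Qed.
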